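(* Let $I$ and $J$ be $yx$-tight ideals in $K[x,y]$. Then $IJ$ is also a $yx$-tight ideal.
   Context: Let $J\subset K[x,y]$ be a $(x,y)$-primary monomial ideal with minimal monomial generating set $G(J)=\{x^{\alpha_i}y^{\beta_i}: i=0,\ldots,m\}$ ordered so that $\alpha_0>\cdots>\alpha_m=0$ and $0=\beta_0<\cdots<\beta_m$. $J$ is $x$-tight if $\alpha_{m-i}=i$ for all $i=0,\ldots,m$; $y$-tight if $\beta_i=i$ for all $i=0,\ldots,m$; $yx$-tight if there exists $0\le j\le m$ with $\beta_i=i$ for all $i=0,\ldots,j$ and $\alpha_{m-i}=i$ for all $i=0,\ldots,m-j$ (so $x$-tight and $y$-tight ideals are $yx$-tight). *)

(* Defs.v *)
From HB Require Import structures.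
From mathcomp Require Import all_boot all_algebra.
From mathcomp Require Import mpoly.
Set Implicit Arguments. Unset Strict Implicit. Unset Printing Implicit Defensive.
Import GRing.Theory.
Local Open Scope ring_scope.

Section Defs.
Variable K : fieldType.
Local Notation P := {mpoly K[2]}.

Definition xvar : P := 'X_(@ord0 1).
Definition yvar : P := 'X_(@ord_max 1).

Definition mono (ab : nat * nat) : P := xvar ^+ ab.1 * yvar ^+ ab.2.

Definition is_ideal (I : P -> Prop) : Prop :=
  [/\ I 0, (forall a b, I a -> I b -> I (a + b)) & (forall r a, I a -> I (r * a))].

Definition same_ideal (I J : P -> Prop) : Prop := forall p, I p <-> J p.

Definition ideal_gen (S : P -> Prop) : P -> Prop :=
  fun p => exists l : seq (P * P),
    (forall q, q \in l -> S q.2) /\ p = \sum_(q <- l) q.1 * q.2.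

Definition prod_ideal (I J : P -> Prop) : P -> Prop :=
  ideal_gen (fun p => exists a b, [/\ I a, J b & p = a * b]).

Definition radical (I : P -> Prop) : P -> Prop := fun p => exists n, I (p ^+ n).

Definition primary (I : P -> Prop) : Prop :=
  is_ideal I /\ ~ I 1 /\
  (forall a b, I (a * b) -> ~ I a -> exists n, I (b ^+ n)).

Definition xy_ideal : P -> Prop := ideal_gen (fun p => p = xvar \/ p = yvar).

Definition xy_primary (I : P -> Prop) : Prop :=
  primary I /\ same_ideal (radical I) xy_ideal.

Definition monomial_ideal (I : P -> Prop) : Prop :=
  is_ideal I /\ exists S : seq (nat * nat),
    same_ideal I (ideal_gen (fun p => exists2 e, e \in S & p = mono e)).

Definition min_monomial_gens (I : P -> Prop) (g : seq (nat * nat)) : Prop :=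
  uniq g /\
  same_ideal I (ideal_gen (fun p => exists2 e, e \in g & p = mono e)) /\
  (forall s : seq (nat * nat), {subset s <= g} ->
     same_ideal I (ideal_gen (fun p => exists2 e, e \in s & p = mono e)) ->
     {subset g <= s}).

Definition yx_tight (J : P -> Prop) : Prop :=
  monomial_ideal J /\ xy_primary J /\
  exists g : seq (nat * nat),
    let m := (size g).-1 in
    let alpha i := (nth (0, 0) g i).1 in
    let beta i := (nth (0, 0) g i).2 in
    [/\ (0 < size g)%N /\ min_monomial_gens J g,
        (forall i, (i < m)%N -> (alpha i.+1 < alpha i)%N /\ (beta i < beta i.+1)%N),
        alpha m = 0%N, beta 0%N = 0%N &
        (exists j, (j <= m)%N /\
          (forall i, (i <= j)%N -> beta i = i) /\
          (forall i, (i <= m - j)%N -> alpha (m - i)%N = i))].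

End Defs.

(* Main.v *)
Require Import Defs.
From mathcomp Require Import all_boot all_algebra.
From mathcomp Require Import mpoly.
From mathcomp Require Import zify.
From Stdlib Require Import FunctionalExtensionality PropExtensionality.
Set Implicit Arguments. Unset Strict Implicit. Unset Printing Implicit Defensive.
Import GRing.Theory.
Local Open Scope ring_scope.

Section Alg.
Variable K : fieldType.
Local Notation P := {mpoly K[2]}.

Lemma gen_ideal (S : P -> Prop) : is_ideal (ideal_gen S).
Proof.
split.
- by exists [::]; rewrite big_nil.
- move=> a b [l1 [H1 ->]] [l2 [H2 ->]]; exists (l1 ++ l2); rewrite big_cat; split => //.
  by move=> q; rewrite mem_cat => /orP [/H1|/H2].
- move=> r a [l [H ->]]; exists [seq (r * q.1, q.2) | q <- l]; split.
    by move=> q /mapP [q' /H Hq ->].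
  by rewrite big_map mulr_sumr; apply: eq_bigr => q _; rewrite mulrA.
Qed.

Lemma gen_sub (S : P -> Prop) p : S p -> ideal_gen S p.
Proof.
by move=> Sp; exists [:: (1, p)]; split; [move=> q; rewrite inE => /eqP -> | rewrite big_seq1 mul1r].
Qed.

Lemma ideal_sum (L : P -> Prop) (I : Type) (r : seq I) (F : I -> P) :
  is_ideal L -> (forall i, L (F i)) -> L (\sum_(i <- r) F i).
Proof. by case=> L0 LD _ HF; apply: big_ind. Qed.

Lemma gen_min (S L : P -> Prop) : is_ideal L -> (forall p, S p -> L p) ->
  forall p, ideal_gen S p -> L p.
Proof.
move=> iL SL p [l [H ->]]; rewrite big_seq; apply: (big_ind L).
- by case: iL.
- by case: iL.
- by move=> q /H /SL; case: iL => _ _; apply.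
Qed.

Lemma idealMr (L : P -> Prop) a r : is_ideal L -> L a -> L (a * r).
Proof. by case=> _ _ H La; rewrite mulrC; apply: H. Qed.

Definition gen_of (s : seq (nat * nat)) : P -> Prop :=
  ideal_gen (fun p => exists2 e, e \in s & p = mono K e).

Lemma mono_mul a b c d : mono K (a + c, b + d)%N = mono K (a, b) * mono K (c, d).
Proof. by rewrite /mono /= !exprD mulrACA. Qed.

Lemma mono_dom (e f : nat * nat) : (f.1 <= e.1)%N -> (f.2 <= e.2)%N ->
  mono K e = mono K (e.1 - f.1, e.2 - f.2)%N * mono K f.
Proof.
case: e f => a b [c d] /= h1 h2; rewrite -[mono K (c, d)]/(mono K (c, d)).
by rewrite -mono_mul !subnK.
Qed.

Lemma gen_dom s (e : nat * nat) :
  (exists2 f, f \in s & (f.1 <= e.1)%N && (f.2 <= e.2)%N) -> gen_of s (mono K e).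
Proof.
case=> f fs /andP [h1 h2]; rewrite (mono_dom h1 h2).
case: (gen_ideal (fun p => exists2 e, e \in s & p = mono K e)) => _ _ H; apply: H.
by apply: gen_sub; exists f.
Qed.

Definition mn (e : nat * nat) : 'X_{1..2} := (U_(@ord0 1) *+ e.1 + U_(@ord_max 1) *+ e.2)%MM.

Lemma monoX e : mono K e = 'X_[mn e].
Proof. by rewrite /mono /mn mpolyXD !mpolyXn. Qed.

Lemma mn0 e : mn e (@ord0 1) = e.1.
Proof. by rewrite /mn mnmDE !mulmnE !mnm1E /=; lia. Qed.
Lemma mn1 e : mn e (@ord_max 1) = e.2.
Proof. by rewrite /mn mnmDE !mulmnE !mnm1E /=; lia. Qed.

Lemma coefMX_nz (q : P) m k : (q * 'X_[m])@_k != 0 -> exists m', k = (m + m')%MM.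
Proof.
rewrite -mcoeff_msupp (perm_mem (msuppMX q m)) => /mapP [m' _ ->]; by exists m'.
Qed.

Lemma gen_mono_inv s (e : nat * nat) : gen_of s (mono K e) ->
  exists2 f, f \in s & (f.1 <= e.1)%N && (f.2 <= e.2)%N.
Proof.
case=> l [H Hl].
case: (boolP [exists i : 'I_(size s), ((nth (0,0) s i).1 <= e.1)%N && ((nth (0,0) s i).2 <= e.2)%N]).
  case/existsP => i Hi; exists (nth (0,0) s i) => //; exact: mem_nth.
move=> /existsPn Hn; exfalso.
have := congr1 (mcoeff (mn e)) Hl.
rewrite monoX mcoeffX eqxx raddf_sum big_seq big1 /=.
  by move/eqP; rewrite oner_eq0.
move=> q /H [f fs ->]; rewrite monoX.
case: (eqVneq ((q.1 * 'X_[mn f])@_(mn e)) 0) => // /coefMX_nz [m' Hm].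
have fi : (index f s < size s)%N by rewrite index_mem.
have := Hn (Ordinal fi).
rewrite /= nth_index // => /negP H0; exfalso; apply: H0.
have h0 : mn e (@ord0 1) = (mn f + m')%MM (@ord0 1) by rewrite Hm.
have h1 : mn e (@ord_max 1) = (mn f + m')%MM (@ord_max 1) by rewrite Hm.
rewrite mnmDE !mn0 in h0; rewrite mnmDE !mn1 in h1.
apply/andP; split; lia.
Qed.


Definition ev (p : P) : K := p.@[fun _ : 'I_2 => (0 : K)].
Lemma ev_x : ev (xvar K) = 0. Proof. by rewrite /ev mevalXU. Qed.
Lemma ev_y : ev (yvar K) = 0. Proof. by rewrite /ev mevalXU. Qed.
Lemma ev_C c : ev c%:MP = c. Proof. by rewrite /ev mevalC. Qed.
Lemma ev_M p q : ev (p * q) = ev p * ev q. Proof. by rewrite /ev mevalM. Qed.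
Lemma ev_D p q : ev (p + q) = ev p + ev q. Proof. by rewrite /ev mevalD. Qed.
Lemma ev_X p n : ev (p ^+ n) = ev p ^+ n. Proof. by rewrite /ev rmorphXn. Qed.

Lemma X_split (m : 'X_{1..2}) i : (0 < m i)%N -> 'X_[m] = 'X_i * 'X_[m - U_(i)] :> P.
Proof.
move=> h; rewrite -mpolyXD; congr mpolyX; apply/mnmP => k.
rewrite mnmDE mnmBE mnm1E; case: eqP => [<-|] /=; lia.
Qed.

Lemma decomp (p : P) : exists c b1 b2, p = c%:MP + xvar K * b1 + yvar K * b2.
Proof.
elim/mpolyind: p => [|c m p _ _ [c0 [b1 [b2 ->]]]].
  by exists 0, 0, 0; rewrite !mulr0 !addr0 mpolyC0.
case: (posnP (m (@ord0 1))) => h0.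
  case: (posnP (m (@ord_max 1))) => h1.
    have -> : m = 0%MM.
      apply/mnmP => k; rewrite mnm0E; case: k => [[|[|k]] hk] //.
      - by have -> : Ordinal hk = @ord0 1 by apply: val_inj.
      - by have -> : Ordinal hk = @ord_max 1 by apply: val_inj.
    by exists (c + c0), b1, b2; rewrite mpolyX0 mpolyCD alg_mpolyC !addrA.
  exists c0, b1, (c *: 'X_[m - U_(@ord_max 1)] + b2).
  rewrite (X_split h1) -/(yvar K) mulrDr -scalerAr; rewrite !addrA; congr (_ + _).
  by rewrite -addrA addrC.
exists c0, (c *: 'X_[m - U_(@ord0 1)] + b1), b2.
rewrite (X_split h0) -/(xvar K) mulrDr -scalerAr !addrA; congr (_ + _).
by rewrite [_ + c0%:MP]addrC.
Qed.

Section Prim.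
Variables (L : P -> Prop) (N M : nat).
Hypotheses (iL : is_ideal L) (LN : L (xvar K ^+ N)) (LM : L (yvar K ^+ M))
  (Lev : forall p, L p -> ev p = 0).

Lemma Lmul r a : L a -> L (r * a). Proof. by case: iL => _ _; apply. Qed.
Lemma Lmulr r a : L a -> L (a * r). Proof. by move=> h; rewrite mulrC; apply: Lmul. Qed.

Lemma wpow b1 b2 : L ((xvar K * b1 + yvar K * b2) ^+ (N + M)).
Proof.
rewrite exprDn; apply: ideal_sum => // i; rewrite -mulr_natr; apply: Lmulr.
have := ltn_ord i; rewrite ltnS => hi.
case: (leqP M i) => c.
  apply: Lmul; rewrite exprMn; apply: Lmulr.
  rewrite -(subnK c) exprD; exact: Lmul.
apply: Lmulr; rewrite exprMn; apply: Lmulr.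
have c2 : (N <= N + M - i)%N by lia.
rewrite -(subnK c2) exprD; exact: Lmul.
Qed.

Lemma notL1 : ~ L 1.
Proof. by move/Lev; rewrite -mpolyC1 ev_C => /eqP; rewrite oner_eq0. Qed.

Lemma primL a b : L (a * b) -> ~ L a -> exists n, L (b ^+ n).
Proof.
move=> Lab nLa; have [c [b1 [b2 Eb]]] := decomp b.
set w := xvar K * b1 + yvar K * b2.
have Lw := wpow b1 b2; rewrite -/w in Lw.
case: (eqVneq c 0) => [c0|cn0].
  by exists (N + M)%N; rewrite Eb c0 mpolyC0 add0r.
exfalso; apply: nLa.
set n := (N + M)%N.
have Eb' : b = c%:MP - - w by rewrite opprK Eb /w addrA.
have E1 : c%:MP ^+ n = b * (\sum_(i < n) c%:MP ^+ (n.-1 - i) * (- w) ^+ i) + (- w) ^+ n.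
  by rewrite Eb' -subrXX subrK.
have L2 : L (a * c%:MP ^+ n).
  rewrite E1 mulrDr mulrA; case: iL => _ LD _; apply: LD.
    exact: Lmulr.
  by rewrite exprNn mulrA; apply: Lmul.
have -> : a = (c ^- n)%:MP * (a * c%:MP ^+ n).
  rewrite mulrCA -rmorphXn -mpolyCM mulVf ?mpolyC1 ?mulr1 //.
  by rewrite expf_neq0.
exact: Lmul.
Qed.

Lemma radL : same_ideal (radical L) (@xy_ideal K).
Proof.
move=> p; split.
  case=> n Ln; have := Lev Ln; rewrite ev_X => /eqP; rewrite expf_eq0 => /andP [_ /eqP e0].
  have [c [b1 [b2 Ep]]] := decomp p.
  have ec : c = 0.
    by move: e0; rewrite Ep !ev_D !ev_M ev_C ev_x ev_y !mul0r !addr0.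
  exists [:: (b1, xvar K); (b2, yvar K)]; split.
    by move=> q; rewrite !inE => /orP [/eqP ->|/eqP ->]; [left|right].
  by rewrite big_cons big_seq1 Ep ec mpolyC0 add0r /= [b1 * _]mulrC [b2 * _]mulrC.
move=> Hp.
have e0 : ev p = 0.
  have iev : is_ideal (fun q : P => ev q = 0).
    split.
    - by rewrite /ev meval0.
    - by move=> u v hu hv; rewrite ev_D hu hv addr0.
    - by move=> r u hu; rewrite ev_M hu mulr0.
  apply: (gen_min iev) Hp => q [->|->]; [exact: ev_x|exact: ev_y].
have [c [b1 [b2 Ep]]] := decomp p.
have ec : c = 0.
  by move: e0; rewrite Ep !ev_D !ev_M ev_C ev_x ev_y !mul0r !addr0.
by exists (N + M)%N; rewrite Ep ec mpolyC0 add0r; apply: wpow.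
Qed.

Lemma xyprimL : xy_primary L.
Proof. split; last exact: radL. split => //; split; [exact: notL1|exact: primL]. Qed.
End Prim.

End Alg.

Local Close Scope ring_scope.

Section Comb.
Definition al (g : seq (nat * nat)) i := (nth (0, 0) g i).1.
Definition be (g : seq (nat * nat)) i := (nth (0, 0) g i).2.
Definition stair (g : seq (nat*nat)) :=
  forall i, (i < (size g).-1)%N -> (al g i.+1 < al g i)%N /\ (be g i < be g i.+1)%N.

Lemma stair_mono g i k : stair g -> (i <= k)%N -> (k <= (size g).-1)%N ->
  (al g k + (k - i) <= al g i)%N /\ (be g i + (k - i) <= be g k)%N.
Proof.
move=> st; elim: k => [|k IH] ik km.
  have -> : i = 0%N by lia. split; lia.
case: (ltnP k i) => ki.
  have -> : i = k.+1 by lia. split; lia.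
have [h1 h2] := IH ki (ltnW km).
have [s1 s2] := st k km.
lia.
Qed.

Lemma stair_uniq g : stair g -> uniq g.
Proof.
move=> st.
have : sorted (fun a b : nat * nat => b.1 < a.1)%N g.
  apply/(sortedP (0,0)) => i Hi; have := st i; rewrite /al => H.
  by case: (H _); [lia|].
apply: sorted_uniq.
- by move=> a b c /= h1 h2; lia.
- by move=> a /=; rewrite ltnn.
Qed.

Lemma stair_anti g e f : stair g -> e \in g -> f \in g ->
  (f.1 <= e.1)%N -> (f.2 <= e.2)%N -> f = e.
Proof.
case: e => a b; case: f => c0 d0 st eg fg /= h1 h2.
set e := (a, b) in eg *; set f := (c0, d0) in fg *.
have ie : (index e g < size g)%N by rewrite index_mem.
have if_ : (index f g < size g)%N by rewrite index_mem.
have Ee := nth_index (0,0) eg; have Ef := nth_index (0,0) fg.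
case: (ltngtP (index e g) (index f g)) => c.
- have hh : (index f g <= (size g).-1)%N by lia.
  have := stair_mono st (ltnW c) hh.
  rewrite /al /be Ee Ef; case=> /= H1 H2; exfalso; lia.
- have hh : (index e g <= (size g).-1)%N by lia.
  have := stair_mono st (ltnW c) hh.
  rewrite /al /be Ee Ef; case=> /= H1 H2; exfalso; lia.
- by rewrite -Ee -Ef c.
Qed.

Definition tight g j :=
  [/\ (j <= (size g).-1)%N, (forall i, (i <= j)%N -> be g i = i) &
      (forall i, (i <= (size g).-1 - j)%N -> al g ((size g).-1 - i)%N = i)].

Section OneIdeal.
Variables (g : seq (nat * nat)) (j : nat).
Hypotheses (st : stair g) (tg : tight g j).
Local Notation m := (size g).-1.

Lemma al_j : al g j = (m - j)%N.
Proof. case: tg => jm _ H; have := H (m - j)%N (leqnn _); by have -> : (m - (m - j) = j)%N by lia. Qed.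
Lemma be_j : be g j = j.
Proof. by case: tg => _ H _; apply: H. Qed.

Lemma T1 k : (k <= m)%N -> (m <= al g k + be g k)%N.
Proof.
move=> km; case: tg => jm Hb Ha.
case: (leqP k j) => kj.
  have [h1 _] := stair_mono st kj jm.
  rewrite al_j in h1; rewrite Hb //; lia.
have [_ h2] := stair_mono st (ltnW kj) km.
rewrite be_j in h2.
have := Ha (m - k)%N.
have -> : (m - (m - k) = k)%N by lia.
move=> -> ; lia.
Qed.

Lemma T2 k : (k <= m)%N -> (be g k < j)%N ->
  [/\ (k < j)%N, be g k = k, be g k.+1 = k.+1 & (al g k.+1 < al g k)%N].
Proof.
move=> km bk; case: tg => jm Hb Ha.
have kj : (k < j)%N.
  case: (ltnP k j) => // jk; have [_ h] := stair_mono st jk km; rewrite be_j in h; lia.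
split => //; try (apply: Hb; lia).
by case: (@st k _) => //; lia.
Qed.

Lemma T3 k : (k <= m)%N -> (al g k < m - j)%N ->
  [/\ (j < k)%N, al g k = (m - k)%N, al g k.-1 = (m - k).+1 & (be g k.-1 < be g k)%N].
Proof.
move=> km ak; case: tg => jm Hb Ha.
have jk : (j < k)%N.
  case: (ltnP j k) => // kj; have [h _] := stair_mono st kj jm; rewrite al_j in h; lia.
have a1 : al g k = (m - k)%N.
  have e1 : (m - (m - k) = k)%N by lia.
  have h1 : (m - k <= m - j)%N by lia.
  by have := Ha _ h1; rewrite e1.
have a2 : al g k.-1 = (m - k).+1.
  have e1 : (m - (m - k).+1 = k.-1)%N by lia.
  have h1 : ((m - k).+1 <= m - j)%N by lia.
  by have := Ha _ h1; rewrite e1.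
have hk : (k.-1 < m)%N by lia.
have := @st k.-1 hk; have -> : k.-1.+1 = k by lia.
by case=> _ H; split.
Qed.
End OneIdeal.

Lemma same_eq (K : fieldType) (A B : {mpoly K[2]} -> Prop) : same_ideal A B -> A = B.
Proof.
move=> H; apply: functional_extensionality => p.
by apply: propositional_extensionality; apply: H.
Qed.

Lemma ev_ideal (K : fieldType) : is_ideal (fun q : {mpoly K[2]} => ev q = 0%R).
Proof.
split.
- by rewrite /ev meval0.
- by move=> u v hu hv; rewrite ev_D hu hv GRing.addr0.
- by move=> r u hu; rewrite ev_M hu GRing.mulr0.
Qed.

Lemma mono_x (K : fieldType) a : mono K (a, 0%N) = (xvar K ^+ a)%R.
Proof. by rewrite /mono /= GRing.expr0 GRing.mulr1. Qed.
Lemma mono_y (K : fieldType) b : mono K (0%N, b) = (yvar K ^+ b)%R.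
Proof. by rewrite /mono /= GRing.expr0 GRing.mul1r. Qed.

Lemma nth_al_be (g : seq (nat * nat)) k : nth (0,0) g k = (al g k, be g k).
Proof. by rewrite /al /be; case: (nth _ _ _). Qed.

Lemma tight_gen (K : fieldType) g j : stair g -> tight g j -> (0 < size g)%N ->
  al g (size g).-1 = 0%N -> be g 0 = 0%N -> (0 < (size g).-1)%N -> yx_tight (@gen_of K g).
Proof.
move=> st tg sz alm be0 pos.
have iL := @gen_ideal K (fun p => exists2 e, e \in g & p = mono K e).
have memk k : (k <= (size g).-1)%N -> nth (0,0) g k \in g.
  by move=> hk; apply: mem_nth; rewrite (leq_ltn_trans hk) // ltn_predL.
have nz e : e \in g -> (0 < e.1 + e.2)%N.
  case: e => a b eg /=.
  have ie : (index (a, b) g < size g)%N by rewrite index_mem.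
  have kk : (index (a, b) g <= (size g).-1)%N by lia.
  have [h5 _] := stair_mono st kk (leqnn _).
  have [_ h4] := stair_mono st (leq0n _) kk.
  have Ee : nth (0,0) g (index (a, b) g) = (a, b) := nth_index _ eg.
  move: h5 h4; rewrite alm be0 /al /be Ee /=; lia.
have Lev : forall p, @gen_of K g p -> ev p = 0%R.
  apply: gen_min; first exact: ev_ideal.
  move=> p [e eg ->]; rewrite /mono ev_M !ev_X ev_x ev_y !GRing.expr0n.
  have := nz e eg; case: e {eg} => [[|a] [|b]] //= _; by rewrite ?GRing.mulr0 ?GRing.mul0r.
have LN : @gen_of K g (xvar K ^+ al g 0)%R.
  apply: gen_sub; exists (nth (0,0) g 0); first by apply: memk.
  by rewrite nth_al_be be0 mono_x.
have LM : @gen_of K g (yvar K ^+ be g (size g).-1)%R.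
  apply: gen_sub; exists (nth (0,0) g (size g).-1); first by apply: memk.
  by rewrite nth_al_be alm mono_y.
split; [|split].
- by split => //; exists g.
- exact: xyprimL iL LN LM Lev.
exists g; split => //.
  split => //; split; first exact: stair_uniq.
  split => // s sub H e eg.
  have Le : @gen_of K g (mono K e) by apply: gen_sub; exists e.
  have := gen_mono_inv (proj1 (H _) Le) => [[f fs /andP [h1 h2]]].
  by rewrite -(stair_anti st eg (sub _ fs) h1 h2).
exists j; case: tg => h1 h2 h3; split => //.
Qed.

Section Prod.
Variables (g1 g2 : seq (nat * nat)) (j1 j2 : nat).
Hypotheses (st1 : stair g1) (tg1 : tight g1 j1) (st2 : stair g2) (tg2 : tight g2 j2).
Hypotheses (sz1 : (0 < size g1)%N) (sz2 : (0 < size g2)%N).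
Hypotheses (b01 : be g1 0 = 0%N) (b02 : be g2 0 = 0%N).
Hypotheses (am1 : al g1 (size g1).-1 = 0%N) (am2 : al g2 (size g2).-1 = 0%N).
Local Notation m1 := (size g1).-1.
Local Notation m2 := (size g2).-1.
Definition pp := (m1 - j1 + (m2 - j2))%N.
Definition qq := (j1 + j2)%N.

Definition S12 := [seq (a.1 + b.1, a.2 + b.2)%N | a <- g1, b <- g2].
Definition E12 (e : nat * nat) : bool :=
  has (fun s : nat * nat => (s.1 <= e.1)%N && (s.2 <= e.2)%N) S12.

Lemma E_intro k1 k2 (e : nat * nat) : (k1 <= m1)%N -> (k2 <= m2)%N ->
  (al g1 k1 + al g2 k2 <= e.1)%N -> (be g1 k1 + be g2 k2 <= e.2)%N -> E12 e.
Proof.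
move=> h1 h2 h3 h4; apply/hasP.
exists (al g1 k1 + al g2 k2, be g1 k1 + be g2 k2)%N; last by rewrite /= h3 h4.
apply/allpairsP; exists (nth (0,0) g1 k1, nth (0,0) g2 k2); split => //.
- by apply: mem_nth; rewrite (leq_ltn_trans h1) // ltn_predL.
- by apply: mem_nth; rewrite (leq_ltn_trans h2) // ltn_predL.
Qed.

Lemma E_elim (e : nat * nat) : E12 e -> exists k1 k2, [/\ (k1 <= m1)%N, (k2 <= m2)%N,
  (al g1 k1 + al g2 k2 <= e.1)%N & (be g1 k1 + be g2 k2 <= e.2)%N].
Proof.
case/hasP => s /allpairsP [[a b] [ha hb ->]] /andP [h3 h4].
exists (index a g1), (index b g2).
have i1 : (index a g1 < size g1)%N by rewrite index_mem.
have i2 : (index b g2 < size g2)%N by rewrite index_mem.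
rewrite /al /be !nth_index //; split => //; lia.
Qed.

Lemma exA b : exists a, (fun a => E12 (a, b)) a.
Proof. by exists (al g1 0 + al g2 0)%N; apply: (@E_intro 0 0) => //=; rewrite b01 b02. Qed.
Lemma exB a : exists b, (fun b => E12 (a, b)) b.
Proof. by exists (be g1 m1 + be g2 m2)%N; apply: (@E_intro m1 m2) => //=; rewrite am1 am2. Qed.

Definition ff b := ex_minn (exA b).
Definition hh a := ex_minn (exB a).

Lemma ffP b : E12 (ff b, b) /\ forall a, E12 (a, b) -> (ff b <= a)%N.
Proof. rewrite /ff; case: ex_minnP => a Ha H; split => //. Qed.
Lemma hhP a : E12 (a, hh a) /\ forall b, E12 (a, b) -> (hh a <= b)%N.
Proof. rewrite /hh; case: ex_minnP => b Hb H; split => //. Qed.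

Lemma F2 b : (b < qq)%N -> (ff b.+1 < ff b)%N.
Proof.
move=> bq; case: tg1 => jm1 _ _; case: tg2 => jm2 _ _.
have [Hb _] := ffP b; have [_ Hm] := ffP b.+1.
have [k1 [k2 [h1 h2 h3 h4]]] := E_elim Hb; rewrite /= in h3 h4.
case: (ltnP (be g1 k1) j1) => c1.
  have [_ e1 e2 e3] := T2 st1 tg1 h1 c1.
  suff: (ff b.+1 <= (ff b).-1)%N by lia.
  apply: Hm.
  apply: (@E_intro k1.+1 k2) => /=. lia. lia. lia. lia.
case: (ltnP (be g2 k2) j2) => c2; last by rewrite /qq in bq; lia.
have [_ e1 e2 e3] := T2 st2 tg2 h2 c2.
suff: (ff b.+1 <= (ff b).-1)%N by lia.
apply: Hm.
apply: (@E_intro k1 k2.+1) => /=. lia. lia. lia. lia.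
Qed.

Lemma H2 a : (a < pp)%N -> (hh a.+1 < hh a)%N.
Proof.
move=> ap; case: tg1 => jm1 _ _; case: tg2 => jm2 _ _.
have [Ha _] := hhP a; have [_ Hm] := hhP a.+1.
have [k1 [k2 [h1 h2 h3 h4]]] := E_elim Ha; rewrite /= in h3 h4.
case: (ltnP (al g1 k1) (m1 - j1)) => c1.
  have [e0 e1 e2 e3] := T3 st1 tg1 h1 c1.
  suff: (hh a.+1 <= (hh a).-1)%N by lia.
  apply: Hm.
  apply: (@E_intro k1.-1 k2) => /=. lia. lia. lia. lia.
case: (ltnP (al g2 k2) (m2 - j2)) => c2; last by rewrite /pp in ap; lia.
have [e0 e1 e2 e3] := T3 st2 tg2 h2 c2.
suff: (hh a.+1 <= (hh a).-1)%N by lia.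
apply: Hm.
apply: (@E_intro k1 k2.-1) => /=. lia. lia. lia. lia.
Qed.

Lemma Epq : E12 (pp, qq).
Proof.
case: tg1 => jm1 _ _; case: tg2 => jm2 _ _.
apply: (@E_intro j1 j2) => //=; rewrite /pp /qq ?(al_j tg1) ?(al_j tg2)
  ?(be_j tg1) ?(be_j tg2) //.
Qed.

Lemma Esum e : E12 e -> (pp + qq <= e.1 + e.2)%N.
Proof.
case/E_elim => k1 [k2 [h1 h2 h3 h4]].
have := T1 st1 tg1 h1; have := T1 st2 tg2 h2.
case: tg1 => jm1 _ _; case: tg2 => jm2 _ _.
rewrite /pp /qq; lia.
Qed.

Lemma F3 : ff qq = pp.
Proof.
have [H1 Hm] := ffP qq.
apply/eqP; rewrite eqn_leq Hm ?Epq //=.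
have := Esum H1 => /=; lia.
Qed.

Lemma H3 : hh pp = qq.
Proof.
have [H1 Hm] := hhP pp.
apply/eqP; rewrite eqn_leq Hm ?Epq //=.
have := Esum H1 => /=; lia.
Qed.

Definition GG k : nat * nat :=
  if (k <= qq)%N then (ff k, k) else ((pp + qq - k)%N, hh (pp + qq - k)).
Definition gp := mkseq GG (pp + qq).+1.

Lemma size_gp : (size gp).-1 = (pp + qq)%N.
Proof. by rewrite size_mkseq. Qed.

Lemma nth_gp k : (k <= pp + qq)%N -> nth (0,0) gp k = GG k.
Proof. by move=> h; rewrite nth_mkseq. Qed.

Lemma GG_le k : (k <= qq)%N -> GG k = (ff k, k).
Proof. by rewrite /GG => ->. Qed.
Lemma GG_gt k : (qq < k)%N -> GG k = ((pp + qq - k)%N, hh (pp + qq - k)).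
Proof. by move=> h; rewrite /GG leqNgt h. Qed.

Lemma stair_gp : stair gp.
Proof.
move=> i; rewrite size_gp => Hi; rewrite /al /be !nth_gp; try lia.
case: (ltnP i qq) => c.
  rewrite (@GG_le i) ?(@GG_le i.+1) /=; try lia; split; [exact: F2| lia].
case: (leqP i qq) => c'.
  have -> : i = qq by lia.
  rewrite (@GG_le qq) // (@GG_gt qq.+1); last lia.
  rewrite /= F3.
  have -> : (pp + qq - qq.+1 = pp.-1)%N by lia.
  have hp := @H2 pp.-1; have e1 : pp.-1.+1 = pp by lia.
  rewrite e1 H3 in hp; split; [lia| apply: hp; lia].
rewrite (@GG_gt i) ?(@GG_gt i.+1) /=; try lia.
split; first lia.
have -> : (pp + qq - i = (pp + qq - i.+1).+1)%N by lia.
apply: H2; lia.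
Qed.

Lemma gp_last : al gp (size gp).-1 = 0%N.
Proof.
rewrite size_gp /al nth_gp //.
case: (leqP (pp + qq) qq) => c.
  rewrite GG_le //=; have pp0 : pp = 0%N by lia.
  by move: F3; rewrite pp0 add0n.
by rewrite GG_gt //= subnn.
Qed.

Lemma gp_first : be gp 0 = 0%N.
Proof. by rewrite /be nth_gp // GG_le. Qed.

Lemma tight_gp : tight gp qq.
Proof.
rewrite /tight size_gp; split.
- lia.
- by move=> i hi; rewrite /be nth_gp ?GG_le //; lia.
- move=> i hi; rewrite /al nth_gp; last lia.
  case: (leqP (pp + qq - i) qq) => c.
    rewrite GG_le //= ; have -> : (pp + qq - i = qq)%N by lia.
    rewrite F3; lia.
  rewrite GG_gt //=; lia.
Qed.

Lemma gp_E e : e \in gp -> E12 e.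
Proof.
move=> /(nthP (0,0)) [k]; rewrite size_mkseq => hk <-.
rewrite nth_gp; last lia.
case: (leqP k qq) => c.
  by rewrite GG_le //; case: (ffP k).
by rewrite GG_gt //; case: (hhP (pp + qq - k)).
Qed.

Lemma E_dom e : E12 e -> exists2 f, f \in gp & ((f.1 <= e.1)%N && (f.2 <= e.2)%N).
Proof.
move=> He.
have mem k : (k <= pp + qq)%N -> GG k \in gp.
  move=> hk; rewrite -nth_gp //; apply: mem_nth; rewrite size_mkseq; lia.
case: e He => a b He.
case: (leqP b qq) => c1.
  exists (GG b); first by apply: mem; lia.
  by rewrite GG_le //= leqnn andbT; case: (ffP b) => _; apply.
case: (leqP pp a) => c2.
  exists (GG qq); first by apply: mem; lia.
  rewrite GG_le //= F3; apply/andP; split; lia.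
exists (GG (pp + qq - a)); first by apply: mem; lia.
rewrite GG_gt; last lia.
have -> : (pp + qq - (pp + qq - a) = a)%N by lia.
by rewrite /= leqnn /=; case: (hhP a) => _; apply.
Qed.

Lemma gp_pos : (0 < size g1 + size g2 - 2 -> 0 < pp + qq)%N.
Proof. case: tg1 => jm1 _ _; case: tg2 => jm2 _ _; rewrite /pp /qq; lia. Qed.

Lemma prod_eq (K : fieldType) :
  prod_ideal (@gen_of K g1) (@gen_of K g2) = @gen_of K gp.
Proof.
apply: same_eq => p; split.
  have key1 e1 : e1 \in g1 -> forall b, @gen_of K g2 b -> @gen_of K gp (mono K e1 * b)%R.
    move=> e1g; apply: gen_min.
      split.
      - by rewrite GRing.mulr0; case: (@gen_ideal K (fun p => exists2 e, e \in gp & p = mono K e)).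
      - move=> u v hu hv; rewrite GRing.mulrDr.
        by case: (@gen_ideal K (fun p => exists2 e, e \in gp & p = mono K e)) => _ H _; apply: H.
      - move=> r u hu; rewrite GRing.mulrCA.
        by case: (@gen_ideal K (fun p => exists2 e, e \in gp & p = mono K e)) => _ _ H; apply: H.
    move=> q [e2 e2g ->].
    case: e1 e1g => a1 b1 e1g; case: e2 e2g => a2 b2 e2g.
    rewrite -mono_mul; apply: gen_dom; apply: E_dom.
    have i1 : (index (a1, b1) g1 < size g1)%N by rewrite index_mem.
    have i2 : (index (a2, b2) g2 < size g2)%N by rewrite index_mem.
    apply: (@E_intro (index (a1, b1) g1) (index (a2, b2) g2)); try lia;
      rewrite /al /be !nth_index //.
  have key2 : forall a, @gen_of K g1 a -> forall b, @gen_of K g2 b -> @gen_of K gp (a * b)%R.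
    apply: gen_min.
      split.
      - move=> b _; rewrite GRing.mul0r.
        by case: (@gen_ideal K (fun p => exists2 e, e \in gp & p = mono K e)).
      - move=> u v hu hv b hb; rewrite GRing.mulrDl.
        case: (@gen_ideal K (fun p => exists2 e, e \in gp & p = mono K e)) => _ H _.
        by apply: H; [apply: hu|apply: hv].
      - move=> r u hu b hb; rewrite -GRing.mulrA.
        case: (@gen_ideal K (fun p => exists2 e, e \in gp & p = mono K e)) => _ _ H.
        by apply: H; apply: hu.
    by move=> q [e1 e1g ->]; apply: key1.
  apply: gen_min; first exact: gen_ideal.
  by move=> q [a [b [ha hb ->]]]; apply: key2.
apply: gen_min; first exact: gen_ideal.
move=> q [e eg ->].
have [k1 [k2 [h1 h2 h3 h4]]] := E_elim (gp_E eg).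
rewrite (@mono_dom K e (al g1 k1 + al g2 k2, be g1 k1 + be g2 k2)%N h3 h4) mono_mul.
case: (@gen_ideal K (fun p => exists a b, [/\ @gen_of K g1 a, @gen_of K g2 b & p = (a * b)%R])) => _ _ H.
apply: H; apply: gen_sub.
exists (mono K (al g1 k1, be g1 k1)), (mono K (al g2 k2, be g2 k2)); split => //.
- apply: gen_sub; exists (nth (0,0) g1 k1); last by rewrite nth_al_be.
  by apply: mem_nth; rewrite (leq_ltn_trans h1) // ltn_predL.
- apply: gen_sub; exists (nth (0,0) g2 k2); last by rewrite nth_al_be.
  by apply: mem_nth; rewrite (leq_ltn_trans h2) // ltn_predL.
Qed.

End Prod.
End Comb.
Lemma ppqq g1 g2 j1 j2 : tight g1 j1 -> tight g2 j2 ->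
  pp g1 g2 j1 j2 + qq j1 j2 = ((size g1).-1 + (size g2).-1)%N.
Proof. case=> h1 _ _ [h2 _ _]; rewrite /pp /qq; lia. Qed.

Lemma unpack (K : fieldType) (I : {mpoly K[2]} -> Prop) : yx_tight I ->
  exists g j, [/\ I = @gen_of K g, stair g, tight g j &
    [/\ (0 < size g)%N, be g 0 = 0%N, al g (size g).-1 = 0%N & (0 < (size g).-1)%N]].
Proof.
case=> _ [[[_ [n1 _]] _] [g [[sz [_ [sI _]]] st alm be0 [j [jm [Hb Ha]]]]]].
have eI := same_eq sI.
have be0' : be g 0 = 0%N := be0.
have alm' : al g (size g).-1 = 0%N := alm.
have st' : stair g := st.
have tg' : tight g j by split.
clear be0 alm st; rename be0' into be0; rename alm' into alm.
exists g, j; split => //; split => //.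
case: (posnP (size g).-1) => // h0; exfalso; apply: n1; rewrite eI.
apply: gen_sub; exists (nth (0,0) g 0).
  by apply: mem_nth.
rewrite nth_al_be be0; rewrite h0 in alm; rewrite alm mono_x.
by rewrite GRing.expr0.
Qed.

Theorem theorem2p12 (K : fieldType) (I J : {mpoly K[2]} -> Prop) :
  yx_tight I -> yx_tight J -> yx_tight (prod_ideal I J).
Proof.
move=> /unpack [g1 [j1 [-> st1 tg1 [sz1 b01 am1 p1]]]].
move=> /unpack [g2 [j2 [-> st2 tg2 [sz2 b02 am2 p2]]]].
rewrite (prod_eq st1 tg1 st2 tg2 sz1 sz2 b01 b02 am1 am2 K).
apply: (@tight_gen K _ (qq j1 j2)).
- exact: stair_gp.
- exact: tight_gp.
- by rewrite size_mkseq.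
- exact: gp_last.
- exact: gp_first.
- by rewrite size_gp (ppqq tg1 tg2); lia.
Qed.
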